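(* Let $p:Y\to Z$ be a quandle covering and $p_*:\mathrm{As}(Y)\to\mathrm{As}(Z)$ the induced surjection ($e_y\mapsto e_{p(y)}$). Then $p_*$ is a central extension. Moreover, if $Y$ and $Z$ are connected and $Z$ is of type $t_Z<\infty$, then $\mathrm{Ker}(p_* )$ is annihilated by $t_Z$.
   Context: A quandle is a set $X$ with a binary operation $\lhd$ such that $a\lhd a=a$, each $x\mapsto x\lhd a$ is bijective, and $(a\lhd b)\lhd c=(a\lhd c)\lhd(b\lhd c)$. A quandle homomorphism $f$ satisfies $f(a\lhd b)=f(a)\lhd f(b)$. A quandle covering is a surjective quandle homomorphism $p:Y\to Z$ such that $p(\tilde x)=p(\tilde y)$ implies $\tilde a\lhd\tilde x=\tilde a\lhd\tilde y$ for all $\tilde a,\tilde x,\tilde y\in Y$. The adjoint group $\mathrm{As}(X)$ has generators $e_x$ and relations $e_{x\lhd y}=e_y^{-1}e_xe_y$; it acts on $X$ by $x\cdot e_y=x\lhd y$, and $X$ is connected if this action is transitive. The type $t_Z$ is the smallest positive $N$ with $x\lhd^N y=x$ for all $x,y\in Z$ ($N$-fold application of $\bullet\lhd y$). *)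

(* Defs.v *)
From mathcomp Require Import all_boot.
Set Implicit Arguments. Unset Strict Implicit. Unset Printing Implicit Defensive.

Record quandle := Quandle {
  qcar :> Type;
  qop : qcar -> qcar -> qcar;
  qop_idem : forall a, qop a a = a;
  qop_bij : forall a, bijective (fun x => qop x a);
  qop_rdist : forall a b c, qop (qop a b) c = qop (qop a c) (qop b c)
}.

Notation "a <| b" := (qop a b) (at level 40, left associativity).

Definition quandle_hom (X Y : quandle) (f : X -> Y) : Prop :=
  forall a b, f (a <| b) = f a <| f b.

Definition quandle_covering (Y Z : quandle) (p : Y -> Z) : Prop :=
  quandle_hom p /\ (forall z, exists y, p y = z) /\
  (forall a x y : Y, p x = p y -> a <| x = a <| y).

(* Words in the generators e_x (true) and their inverses e_x^{-1} (false). *)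
Definition word (X : quandle) := seq (X * bool).

(* Equality in As(X): the smallest congruence on words containing the free
   group relations and e_{x<|y} = e_y^{-1} e_x e_y. *)
Inductive as_eq (X : quandle) : word X -> word X -> Prop :=
| as_refl w : as_eq w w
| as_sym w v : as_eq w v -> as_eq v w
| as_trans w v u : as_eq w v -> as_eq v u -> as_eq w u
| as_cat w1 w2 v1 v2 : as_eq w1 v1 -> as_eq w2 v2 -> as_eq (w1 ++ w2) (v1 ++ v2)
| as_inv_r x : as_eq [:: (x, true); (x, false)] [::]
| as_inv_l x : as_eq [:: (x, false); (x, true)] [::]
| as_rel x y : as_eq [:: (x <| y, true)] [:: (y, false); (x, true); (y, true)].

(* Right action of As(X) on X: x . e_y = x <| y, x . e_y^{-1} = the unique z
   with z <| y = x. [as_act w x z] means x . w = z. *)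
Inductive as_act (X : quandle) : word X -> X -> X -> Prop :=
| act_nil x : as_act [::] x x
| act_pos y w x z : as_act w (x <| y) z -> as_act ((y, true) :: w) x z
| act_neg y w x x' z : x' <| y = x -> as_act w x' z -> as_act ((y, false) :: w) x z.

Definition connected (X : quandle) : Prop :=
  forall x z : X, exists w : word X, as_act w x z.

Definition pstar (Y Z : quandle) (p : Y -> Z) (w : word Y) : word Z :=
  map (fun l => (p l.1, l.2)) w.

Definition in_ker (Y Z : quandle) (p : Y -> Z) (w : word Y) : Prop :=
  as_eq (pstar p w) [::].

Definition is_type (Z : quandle) (t : nat) : Prop :=
  0 < t /\ (forall x y : Z, iter t (fun a => a <| y) x = x) /\
  (forall N, 0 < N -> (forall x y : Z, iter N (fun a => a <| y) x = x) -> t <= N).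

(* Main.v *)
From Stdlib Require Import Setoid Morphisms ClassicalEpsilon.
Require Import Defs.
From mathcomp Require Import all_boot.
Set Implicit Arguments. Unset Strict Implicit. Unset Printing Implicit Defensive.

#[export] Instance as_eq_Equiv (X : quandle) : Equivalence (@as_eq X).
Proof. split; [exact: as_refl| exact: as_sym| exact: as_trans]. Qed.

Lemma aeq_l (X : quandle) (u v v' : word X) : as_eq v v' -> as_eq (u ++ v) (u ++ v').
Proof. by move=> H; apply: as_cat => //; apply: as_refl. Qed.
Lemma aeq_r (X : quandle) (u v v' : word X) : as_eq v v' -> as_eq (v ++ u) (v' ++ u).
Proof. by move=> H; apply: as_cat => //; apply: as_refl. Qed.

Lemma cancel_letter (X : quandle) (x : X) b : as_eq [:: (x, b); (x, ~~ b)] [::].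
Proof. by case: b; [apply: as_inv_r | apply: as_inv_l]. Qed.

Fixpoint winv (X : quandle) (w : word X) : word X :=
  match w with [::] => [::] | (x, b) :: w => winv w ++ [:: (x, ~~ b)] end.

Lemma winv_r (X : quandle) (w : word X) : as_eq (w ++ winv w) [::].
Proof.
elim: w => [|[x b] w IH] /=; first exact: as_refl.
have -> : (x, b) :: w ++ (winv w ++ [:: (x, ~~ b)]) =
          [:: (x, b)] ++ ((w ++ winv w) ++ [:: (x, ~~ b)]) by rewrite !catA.
apply: as_trans; first exact: (aeq_l _ (aeq_r _ IH)).
exact: cancel_letter.
Qed.

Lemma winv_l (X : quandle) (w : word X) : as_eq (winv w ++ w) [::].
Proof.
elim: w => [|[x b] w IH] /=; first exact: as_refl.
have -> : (winv w ++ [:: (x, ~~ b)]) ++ (x, b) :: w =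
          winv w ++ ([:: (x, ~~ b); (x, b)] ++ w) by rewrite -!catA.
have H : as_eq [:: (x, ~~ b); (x, b)] [::] by have := cancel_letter x (~~ b); rewrite negbK.
apply: as_trans; first exact: (aeq_l _ (aeq_r _ H)).
by [].
Qed.

Lemma cancel_left (X : quandle) (g u v : word X) : as_eq (g ++ u) (g ++ v) -> as_eq u v.
Proof.
move=> H.
have H1 : as_eq (winv g ++ (g ++ u)) (winv g ++ (g ++ v)) by apply: aeq_l.
rewrite !catA in H1.
apply: as_trans; last apply: as_trans; [|exact: H1|].
- apply: as_sym. exact: (aeq_r _ (winv_l g)).
- exact: (aeq_r _ (winv_l g)).
Qed.

Definition central (X : quandle) (w : word X) := forall u, as_eq (w ++ u) (u ++ w).

Lemma central_letters (X : quandle) (w : word X) :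
  (forall l, as_eq (w ++ [:: l]) ([:: l] ++ w)) -> central w.
Proof.
move=> H u; elim: u => [|l u IH]; first by rewrite cats0; apply: as_refl.
have -> : w ++ l :: u = (w ++ [:: l]) ++ u by rewrite -catA.
apply: as_trans; first exact: (aeq_r _ (H l)).
rewrite /= -cat1s -[l :: u ++ w]cat1s; exact: aeq_l.
Qed.

Lemma pos_to_neg (X : quandle) (w : word X) a :
  as_eq (w ++ [:: (a, true)]) ([:: (a, true)] ++ w) ->
  as_eq (w ++ [:: (a, false)]) ([:: (a, false)] ++ w).
Proof.
move=> H.
apply: (@cancel_left _ [:: (a, true)]).
rewrite catA.
apply: as_trans; first exact: (aeq_r _ (as_sym H)).
rewrite -catA.
apply: as_trans; first exact: (aeq_l _ (cancel_letter a true)).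
rewrite cats0 catA.
apply: as_sym; apply: as_trans; first exact: (aeq_r _ (cancel_letter a true)).
exact: as_refl.
Qed.

Lemma central_cat (X : quandle) (a b : word X) : central a -> central b -> central (a ++ b).
Proof.
move=> Ha Hb u; rewrite -catA.
apply: as_trans; first exact: (aeq_l _ (Hb u)).
rewrite catA; apply: as_trans; first exact: (aeq_r _ (Ha u)).
rewrite -catA; exact: as_refl.
Qed.

Definition pow (X : quandle) (w : word X) n := flatten (nseq n w).

Lemma powS (X : quandle) (w : word X) n : pow w n.+1 = w ++ pow w n.
Proof. by []. Qed.

Lemma pow_proper (X : quandle) (w v : word X) n : as_eq w v -> as_eq (pow w n) (pow v n).
Proof.
move=> H; elim: n => [|n IH]; first exact: as_refl.
rewrite !powS; exact: as_cat.
Qed.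

Lemma pow_central (X : quandle) (u k : word X) n : central k ->
  as_eq (pow (u ++ k) n) (pow u n ++ pow k n).
Proof.
move=> Hk; elim: n => [|n IH]; first exact: as_refl.
rewrite !powS.
apply: as_trans; first exact: (aeq_l _ IH).
have -> : (u ++ k) ++ pow u n ++ pow k n = u ++ (k ++ pow u n) ++ pow k n by rewrite !catA.
apply: as_trans; first exact: (aeq_l _ (aeq_r _ (Hk _))).
rewrite !catA; exact: as_refl.
Qed.

Lemma rel_pos (X : quandle) (a y : X) :
  as_eq [:: (a, true); (y, true)] [:: (y, true); (a <| y, true)].
Proof.
apply: as_sym.
apply: as_trans; first exact: (aeq_l [:: (y, true)] (as_rel a y)).
have -> : [:: (y, true)] ++ [:: (y, false); (a, true); (y, true)] =
          [:: (y, true); (y, false)] ++ [:: (a, true); (y, true)] by [].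
apply: as_trans; first exact: (aeq_r _ (as_inv_r y)).
exact: as_refl.
Qed.

Lemma rel_neg (X : quandle) (x y : X) :
  as_eq [:: (x <| y, true); (y, false)] [:: (y, false); (x, true)].
Proof.
apply: as_trans; first exact: (aeq_r [:: (y, false)] (as_rel x y)).
have -> : [:: (y, false); (x, true); (y, true)] ++ [:: (y, false)] =
          [:: (y, false); (x, true)] ++ [:: (y, true); (y, false)] by [].
apply: as_trans; first exact: (aeq_l _ (as_inv_r y)).
rewrite cats0; exact: as_refl.
Qed.

Lemma conj_act (X : quandle) (g : word X) a b : as_act g a b ->
  as_eq ([:: (a, true)] ++ g) (g ++ [:: (b, true)]).
Proof.
elim => {g a b} [x|y w x z _ IH|y w x x' z Hx _ IH].
- exact: as_refl.
- have -> : [:: (x, true)] ++ (y, true) :: w = [:: (x, true); (y, true)] ++ w by [].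
  apply: as_trans; first exact: (aeq_r _ (rel_pos x y)).
  have -> : [:: (y, true); (x <| y, true)] ++ w = [:: (y, true)] ++ ([:: (x <| y, true)] ++ w) by [].
  apply: as_trans; first exact: (aeq_l _ IH).
  exact: as_refl.
- have -> : [:: (x, true)] ++ (y, false) :: w = [:: (x, true); (y, false)] ++ w by [].
  rewrite -Hx.
  apply: as_trans; first exact: (aeq_r _ (rel_neg x' y)).
  have -> : [:: (y, false); (x', true)] ++ w = [:: (y, false)] ++ ([:: (x', true)] ++ w) by [].
  apply: as_trans; first exact: (aeq_l _ IH).
  exact: as_refl.
Qed.

Lemma pow_conj (X : quandle) (g : word X) a b n : as_act g a b ->
  as_eq (pow [:: (a, true)] n ++ g) (g ++ pow [:: (b, true)] n).
Proof.
move=> H; elim: n => [|n IH]; first by rewrite /= cats0; exact: as_refl.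
rewrite !powS -catA.
apply: as_trans; first exact: (aeq_l _ IH).
rewrite catA; apply: as_trans; first exact: (aeq_r _ (conj_act H)).
rewrite -catA; exact: as_refl.
Qed.

Lemma act_iter (X : quandle) (y : X) n a :
  as_act (pow [:: (y, true)] n) a (iter n (fun x => x <| y) a).
Proof.
elim: n a => [|n IH] a; first exact: act_nil.
rewrite powS iterSr; apply: act_pos; exact: IH.
Qed.

Lemma bij_ex (X : quandle) (y : X) :
  exists g, cancel (fun x => x <| y) g /\ cancel g (fun x => x <| y).
Proof. by case: (qop_bij y) => g h1 h2; exists g. Qed.

Definition rinv (X : quandle) (y : X) : X -> X :=
  proj1_sig (constructive_indefinite_description _ (bij_ex y)).

Lemma rinvK (X : quandle) (y x : X) : rinv y x <| y = x.
Proof.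
rewrite /rinv; case: constructive_indefinite_description => g [h1 h2] /=; exact: h2.
Qed.
Lemma qopK (X : quandle) (y x : X) : rinv y (x <| y) = x.
Proof.
rewrite /rinv; case: constructive_indefinite_description => g [h1 h2] /=; exact: h1.
Qed.

Fixpoint actZ (Y Z : quandle) (l : Z -> Y) (v : word Z) (a : Y) : Y :=
  match v with
  | [::] => a
  | (z, b) :: v => actZ l v (if b then a <| l z else rinv (l z) a)
  end.

Lemma actZ_cat (Y Z : quandle) (l : Z -> Y) v1 v2 a :
  actZ l (v1 ++ v2) a = actZ l v2 (actZ l v1 a).
Proof. by elim: v1 a => [|[z b] v IH] a //=. Qed.

Lemma actZ_inv (Y Z : quandle) (p : Y -> Z) (hp : quandle_covering p)
  (l : Z -> Y) (hl : forall z, p (l z) = z) v v' :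
  as_eq v v' -> forall a, actZ l v a = actZ l v' a.
Proof.
case: hp => [hom [_ cov]].
elim => {v v'}.
- by [].
- by move=> w v _ IH a; rewrite IH.
- by move=> w v u _ IH1 _ IH2 a; rewrite IH1 IH2.
- by move=> w1 w2 v1 v2 _ IH1 _ IH2 a; rewrite !actZ_cat IH1 IH2.
- by move=> x a /=; rewrite qopK.
- by move=> x a /=; rewrite rinvK.
- move=> x y a /=.
  rewrite qop_rdist rinvK; apply: cov.
  by rewrite hom !hl.
Qed.

Lemma act_Y (Y Z : quandle) (p : Y -> Z) (hp : quandle_covering p)
  (l : Z -> Y) (hl : forall z, p (l z) = z) (w : word Y) a :
  as_act w a (actZ l (pstar p w) a).
Proof.
case: hp => [hom [_ cov]].
elim: w a => [|[y b] w IH] a /=; first exact: act_nil.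
case: b.
- apply: act_pos.
  have -> : a <| l (p y) = a <| y by apply: cov; rewrite hl.
  exact: IH.
- apply: (act_neg (x' := rinv (l (p y)) a)); last exact: IH.
  rewrite -[in RHS](rinvK (l (p y)) a); apply: cov; by rewrite hl.
Qed.

Lemma ker_central (Y Z : quandle) (p : Y -> Z) (hp : quandle_covering p) (w : word Y) :
  in_ker p w -> central w.
Proof.
move=> Hk.
have [hom [surj cov]] := hp.
pose l := fun z => proj1_sig (constructive_indefinite_description _ (surj z)).
have hl : forall z, p (l z) = z.
  by move=> z; rewrite /l; case: constructive_indefinite_description.
have Hpos : forall a, as_eq (w ++ [:: (a, true)]) ([:: (a, true)] ++ w).
  move=> a; apply: as_sym.
  have := conj_act (act_Y hp hl w a).
  by rewrite (actZ_inv hp hl Hk a).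
apply: central_letters => [[a b]]; case: b; first exact: Hpos.
exact: pos_to_neg.
Qed.


Lemma iter_hom (X : quandle) (y : X) n a b :
  iter n (fun x => x <| y) (a <| b) = iter n (fun x => x <| y) a <| iter n (fun x => x <| y) b.
Proof. elim: n => [|n IH] //=; by rewrite IH qop_rdist. Qed.

Lemma iter_fix (X : quandle) (y : X) n : iter n (fun x => x <| y) y = y.
Proof. elim: n => [|n IH] //=; by rewrite IH qop_idem. Qed.

Lemma iter_p (Y Z : quandle) (p : Y -> Z) (hom : quandle_hom p) (y : Y) n a :
  p (iter n (fun x => x <| y) a) = iter n (fun x => x <| p y) (p a).
Proof. elim: n => [|n IH] //=; by rewrite hom IH. Qed.

Lemma deck (Y Z : quandle) (p : Y -> Z) (hp : quandle_covering p) t :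
  connected Y -> is_type Z t -> forall y a : Y, iter t (fun x => x <| y) a = a.
Proof.
case: hp => [hom [_ cov]] hY [_ [ht _]] y.
set f := iter t (fun x => x <| y).
have pf : forall b, p (f b) = p b by move=> b; rewrite /f (iter_p hom) ht.
have fop : forall a b, f (a <| b) = f a <| b.
  by move=> a b; rewrite /f iter_hom; apply: cov; apply: pf.
have key : forall g x z, as_act g x z -> f x = x -> f z = z.
  move=> g x z; elim => {g x z} [x|y' w x z _ IH|y' w x x' z Hx _ IH] //.
  - by move=> Hf; apply: IH; rewrite fop Hf.
  - move=> Hf; apply: IH.
    have Hinj := bij_inj (qop_bij y').
    apply: Hinj => /=; by rewrite -fop Hx Hf.
move=> a; have [g Hg] := hY y a.
apply: (key _ _ _ Hg); exact: iter_fix.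
Qed.

Lemma C_central (Y Z : quandle) (p : Y -> Z) (hp : quandle_covering p) t :
  connected Y -> is_type Z t -> forall y : Y, central (pow [:: (y, true)] t).
Proof.
move=> hY ht y.
have Hpos : forall a, as_eq (pow [:: (y, true)] t ++ [:: (a, true)])
                              ([:: (a, true)] ++ pow [:: (y, true)] t).
  move=> a; apply: as_sym.
  have := conj_act (act_iter y t a).
  by rewrite (deck hp hY ht).
apply: central_letters => [[a b]]; case: b; first exact: Hpos.
exact: pos_to_neg.
Qed.

Lemma C_eq (Y Z : quandle) (p : Y -> Z) (hp : quandle_covering p) t :
  connected Y -> is_type Z t -> forall y y' : Y,
  as_eq (pow [:: (y, true)] t) (pow [:: (y', true)] t).
Proof.
move=> hY ht y y'.
have [g Hg] := hY y y'.
apply: (@cancel_left _ g).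
apply: as_trans; first exact: (as_sym (C_central hp hY ht y g)).
exact: pow_conj.
Qed.

Definition good (Y : quandle) t (w : word Y) := central w /\ as_eq (pow w t) [::].

Lemma good_nil (Y : quandle) t : good t ([::] : word Y).
Proof.
split; first by move=> u; rewrite cats0; exact: as_refl.
elim: t => [|n IH]; first exact: as_refl. by [].
Qed.

Lemma good_cat (Y : quandle) t (a b : word Y) : good t a -> good t b -> good t (a ++ b).
Proof.
move=> [ca pa] [cb pb]; split; first exact: central_cat.
apply: as_trans; first exact: pow_central.
apply: (@as_trans _ _ ([::] ++ [::])); first exact: as_cat. exact: as_refl.
Qed.

Lemma swap_letter (Y : quandle) (a c : Y) :
  as_eq [:: (a, true)] ([:: (c, true)] ++ [:: (c, false); (a, true)]).
Proof.
apply: as_sym.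
have -> : [:: (c, true)] ++ [:: (c, false); (a, true)] = [:: (c, true); (c, false)] ++ [:: (a, true)] by [].
apply: as_trans; first exact: (aeq_r _ (as_inv_r c)). exact: as_refl.
Qed.

Lemma gen_good (Y Z : quandle) (p : Y -> Z) (hp : quandle_covering p) t :
  connected Y -> is_type Z t -> forall a c : Y, p c = p a ->
  good t [:: (c, false); (a, true)].
Proof.
move=> hY ht a c Hca.
have ck : central [:: (c, false); (a, true)].
  apply: (ker_central hp); rewrite /in_ker /= Hca; exact: as_inv_l.
split => //.
have H1 : as_eq (pow [:: (a, true)] t)
     (pow [:: (c, true)] t ++ pow [:: (c, false); (a, true)] t).
  apply: as_trans; first exact: (pow_proper t (swap_letter a c)).
  exact: pow_central.
have H2 := C_eq hp hY ht a c.
set k := pow [:: (c, false); (a, true)] t in H1 *.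
set C := pow [:: (c, true)] t in H1 H2 *.
apply: (@cancel_left _ C); rewrite cats0.
exact: (as_trans (as_sym H1) H2).
Qed.

Lemma lift_word (Y Z : quandle) (p : Y -> Z) (hp : quandle_covering p) t
  (hY : connected Y) (ht : is_type Z t)
  (l : Z -> Y) (hl : forall z, p (l z) = z) (w : word Y) :
  exists s, good t s /\ as_eq w (pstar l (pstar p w) ++ s).
Proof.
elim: w => [|[y b] w [s [gs IH]]]; first by exists [::]; split; [exact: good_nil|exact: as_refl].
have Hc : p (l (p y)) = p y by rewrite hl.
set c := l (p y) in Hc *.
case: b.
- have gk := gen_good hp hY ht Hc.
  exists ([:: (c, false); (y, true)] ++ s); split; first exact: good_cat.
  change (as_eq ([:: (y, true)] ++ w) (([:: (c, true)] ++ pstar l (pstar p w)) ++ ([:: (c, false); (y, true)] ++ s))).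
  apply: as_trans; first exact: (aeq_l _ IH).
  rewrite catA; apply: as_trans; first exact: (aeq_r _ (swap_letter y c)).
  rewrite -!catA; apply: aeq_l; rewrite !catA; apply: aeq_r.
  exact: (proj1 gk).
- have gk := gen_good hp hY ht (esym Hc).
  exists (s ++ [:: (y, false); (c, true)]); split; first exact: good_cat.
  change (as_eq ([:: (y, false)] ++ w) (([:: (c, false)] ++ pstar l (pstar p w)) ++ (s ++ [:: (y, false); (c, true)]))).
  apply: as_trans; first exact: (aeq_l _ IH).
  have E : as_eq [:: (y, false)] ([:: (y, false); (c, true)] ++ [:: (c, false)]).
    apply: as_sym.
    have -> : [:: (y, false); (c, true)] ++ [:: (c, false)] = [:: (y, false)] ++ [:: (c, true); (c, false)] by [].
    apply: as_trans; first exact: (aeq_l _ (as_inv_r c)). exact: as_refl.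
  rewrite catA; apply: as_trans; first exact: (aeq_r _ E).
  rewrite -!catA.
  apply: as_trans; first exact: (proj1 gk _).
  change (as_eq (([:: (c, false)] ++ (pstar l (pstar p w) ++ s)) ++ [:: (y, false); (c, true)])
    (([:: (c, false)] ++ pstar l (pstar p w)) ++ (s ++ [:: (y, false); (c, true)]))).
  rewrite -!catA; exact: as_refl.
Qed.

Lemma lift_eq (Y Z : quandle) (p : Y -> Z) (hp : quandle_covering p) t
  (hY : connected Y) (ht : is_type Z t)
  (l : Z -> Y) (hl : forall z, p (l z) = z) (v v' : word Z) :
  as_eq v v' ->
  (exists s, good t s /\ as_eq (pstar l v) (pstar l v' ++ s)) /\
  (exists s, good t s /\ as_eq (pstar l v') (pstar l v ++ s)).
Proof.
have [hom _] := hp.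
have triv : forall w : word Y, exists s, good t s /\ as_eq w (w ++ s).
  by move=> w; exists [::]; split; [exact: good_nil| rewrite cats0; exact: as_refl].
elim => {v v'}.
- by move=> w; split; apply: triv.
- by move=> w v _ [IH1 IH2]; split.
- move=> w v u _ [[s1 [g1 H1]] [s1' [g1' H1']]] _ [[s2 [g2 H2]] [s2' [g2' H2']]]; split.
  + exists (s2 ++ s1); split; first exact: good_cat.
    apply: (as_trans H1); rewrite catA; exact: aeq_r.
  + exists (s1' ++ s2'); split; first exact: good_cat.
    apply: (as_trans H2'); rewrite catA; exact: aeq_r.
- move=> w1 w2 v1 v2 _ [[s1 [g1 H1]] [s1' [g1' H1']]] _ [[s2 [g2 H2]] [s2' [g2' H2']]].
  have gen : forall a b c d s s', good t s -> good t s' ->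
     as_eq (pstar l a) (pstar l c ++ s) -> as_eq (pstar l b) (pstar l d ++ s') ->
     exists s0, good t s0 /\ as_eq (pstar l (a ++ b)) (pstar l (c ++ d) ++ s0).
    move=> a b c d s s' gs gs' Ha Hb; exists (s ++ s'); split; first exact: good_cat.
    rewrite /pstar !map_cat -/(pstar l a) -/(pstar l b) -/(pstar l c) -/(pstar l d).
    apply: as_trans; first exact: (as_cat Ha Hb).
    rewrite -!catA; apply: aeq_l; rewrite !catA; apply: aeq_r; exact: (proj1 gs).
  split; [exact: (gen _ _ _ _ _ _ g1 g2 H1 H2) | exact: (gen _ _ _ _ _ _ g1' g2' H1' H2')].
- move=> x; split; exists [::]; (split; first exact: good_nil); rewrite /= ?cats0.
  + exact: as_inv_r.
  + exact: as_sym (as_inv_r _).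
- move=> x; split; exists [::]; (split; first exact: good_nil); rewrite /= ?cats0.
  + exact: as_inv_l.
  + exact: as_sym (as_inv_l _).
- move=> x y /=.
  set a := l (x <| y). set c := l x <| l y.
  have Hac : p a = p c by rewrite /a /c hom !hl.
  have R : as_eq [:: (l y, false); (l x, true); (l y, true)] [:: (c, true)] by exact: as_sym (as_rel _ _).
  split.
  + exists [:: (c, false); (a, true)]; split; first exact: (gen_good hp hY ht (esym Hac)).
    apply: as_trans; first exact: (swap_letter a c).
    exact: (aeq_r [:: (c, false); (a, true)] (as_sym R)).
  + exists [:: (a, false); (c, true)]; split; first exact: (gen_good hp hY ht Hac).
    apply: as_trans; first exact: R.
    exact: swap_letter.
Qed.

Theorem proposition5p1 (Y Z : quandle) (p : Y -> Z) (hp : quandle_covering p) :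
  (* p_* is a central extension: surjective with central kernel *)
  ((forall v : word Z, exists w : word Y, as_eq (pstar p w) v) /\
   (forall w : word Y, in_ker p w -> forall u : word Y, as_eq (w ++ u) (u ++ w)))
  /\
  (connected Y -> connected Z -> forall t, is_type Z t ->
     forall w : word Y, in_ker p w -> as_eq (flatten (nseq t w)) [::]).
Proof.
split; first split.
- elim => [|[z b] v [w' IH]]; first by exists [::]; exact: as_refl.
  have [_ [surj _]] := hp.
  have [y Hy] := surj z.
  exists ((y, b) :: w') => /=; rewrite Hy.
  exact: (aeq_l [:: (z, b)] IH).
- exact: ker_central.
move=> hY _ t ht w Hk.
have [hom [surj cov]] := hp.
pose l := fun z => proj1_sig (constructive_indefinite_description _ (surj z)).
have hl : forall z, p (l z) = z.
  by move=> z; rewrite /l; case: constructive_indefinite_description.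
have [s1 [g1 H1]] := lift_word hp hY ht hl w.
have [[s2 [g2 H2]] _] := lift_eq hp hY ht hl Hk.
have [_ gp] : good t (s2 ++ s1) by exact: good_cat.
change (as_eq (pow w t) [::]).
apply: as_trans; last exact: gp.
apply: pow_proper; apply: (as_trans H1); exact: aeq_r.
Qed.
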